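(* Let $\varphi:\Sigma_2(\mathbb{N})\to C$ be a finite coloring and $k\ge0$ an integer. Then there exist an infinite set $\mathcal{N}\subseteq\mathbb{N}$ and colors $c_0,c_1,\dots,c_k\in C$ such that for each $0\le i\le k$, $\Sigma_2(\mathcal{N}+i)\subseteq\varphi^{-1}(c_i)$.
   Context: $\mathbb{N}=\{0,1,2,\dots\}$; $\Sigma_2(S)$ denotes the set of 2-element subsets of $S$; $\mathcal{N}+i=\{n+i:n\in\mathcal{N}\}$; $C$ is a finite non-empty set. *)

(* Defs.v *)
From mathcomp Require Import all_boot.
Set Implicit Arguments. Unset Strict Implicit. Unset Printing Implicit Defensive.

(* Sigma_2(nat): 2-element subsets {m, n} of nat, represented canonically
   as ordered pairs (m, n) with m < n (smaller element first). *)
Definition pair2 := {p : nat * nat | p.1 < p.2}.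

Definition shift_pair (i : nat) (p : pair2) : pair2 :=
  exist (fun q : nat * nat => q.1 < q.2) ((sval p).1 + i, (sval p).2 + i)
        (etrans (ltn_add2r i _ _) (svalP p)).

Definition in_sigma2 (S : nat -> Prop) (p : pair2) : Prop :=
  S (sval p).1 /\ S (sval p).2.

Definition infinite_set (S : nat -> Prop) : Prop :=
  forall m, exists n, m <= n /\ S n.

(* Main.v *)
Require Import Defs.
From mathcomp Require Import all_boot.
From Stdlib Require Import Classical ClassicalEpsilon.
Set Implicit Arguments. Unset Strict Implicit.

Section Ramsey.
Variable D : finType.
Variable col : nat -> nat -> D.

Lemma pigeon_seq (S : nat -> Prop) (f : nat -> D) (s : seq D) :
  infinite_set (fun y => S y /\ f y \in s) ->
  exists t, infinite_set (fun y => S y /\ f y = t).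
Proof.
elim: s => [|t s IH] H.
  by have [n [_ [_]]] := H 0; rewrite in_nil.
case: (classic (infinite_set (fun y => S y /\ f y = t))) => Ht; first by exists t.
apply: IH => m.
have [m0 Hm0] := not_all_ex_not _ _ Ht.
have [n [Hn [Sn Fn]]] := H (maxn m m0).
exists n; split; first by apply: leq_trans Hn; apply: leq_maxl.
split => //.
move: Fn; rewrite in_cons => /orP [/eqP E|] //.
exfalso; apply: Hm0; exists n; split => //.
by apply: leq_trans Hn; apply: leq_maxr.
Qed.

Lemma pigeon (S : nat -> Prop) (f : nat -> D) :
  infinite_set S -> exists t, infinite_set (fun y => S y /\ f y = t).
Proof.
move=> H; apply: (@pigeon_seq S f (enum D)) => m.
have [n [Hn Sn]] := H m; exists n; split => //; split => //.
by rewrite mem_enum.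
Qed.

Definition good (S : nat -> Prop) (t : nat * D * (nat -> Prop)) :=
  S t.1.1 /\ infinite_set t.2 /\
  forall y, t.2 y -> S y /\ t.1.1 < y /\ col t.1.1 y = t.1.2.

Lemma good_ex S : infinite_set S -> exists t, good S t.
Proof.
move=> H; have [x [_ Sx]] := H 0.
have H0 : infinite_set (fun y => S y /\ x < y).
  move=> m; have [n [Hn Sn]] := H (maxn m x.+1).
  exists n; split; first by apply: leq_trans Hn; apply: leq_maxl.
  split => //; apply: leq_trans Hn; apply: leq_maxr.
have [t Ht] := pigeon (col x) H0.
exists (x, t, fun y => (S y /\ x < y) /\ col x y = t); split => //; split => //.
by move=> y /= [[Sy xy] Cy].
Qed.

Definition next (S : nat -> Prop) :=
  epsilon (inhabits (0, col 0 0, S)) (good S).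

Definition St (j : nat) := iter j (fun S => (next S).2) (fun _ => True).

Lemma St_good j : infinite_set (St j) /\ good (St j) (next (St j)).
Proof.
elim: j => [|j [I G]].
  have I : infinite_set (St 0) by move=> m; exists m.
  split => //; apply: epsilon_spec; exact: good_ex.
have I' : infinite_set (St j.+1) by case: G => _ [].
split => //; apply: epsilon_spec; exact: good_ex.
Qed.

Lemma St_sub j d y : St (j.+1 + d) y -> St j.+1 y.
Proof.
elim: d => [|d IH]; first by rewrite addn0.
rewrite addnS => H; apply: IH.
by have [_ [_ [_ G]]] := St_good (j.+1 + d); case: (G y H).
Qed.

Definition xs j := (next (St j)).1.1.
Definition cs j := (next (St j)).1.2.

Lemma xs_col j l : j < l -> xs j < xs l /\ col (xs j) (xs l) = cs j.
Proof.
move=> jl.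
have Sl : St l (xs l) by case: (St_good l) => _ [].
have E : l = j.+1 + (l - j.+1) by rewrite subnKC.
rewrite {1}E in Sl; have S1 := St_sub Sl.
by have [_ [_ [_ G]]] := St_good j; case: (G _ S1).
Qed.

Lemma xs_ge j : j <= xs j.
Proof.
elim: j => [|j IH] //.
by have [H _] := xs_col (ltnSn j); apply: leq_ltn_trans H.
Qed.

Lemma ramsey : exists (N : nat -> Prop) (c : D), infinite_set N /\
  forall x y, N x -> N y -> x < y -> col x y = c.
Proof.
have [t Ht] := @pigeon (fun _ => True) cs (fun m => ex_intro _ m (conj (leqnn m) I)).
exists (fun y => exists j, (True /\ cs j = t) /\ xs j = y), t; split.
  move=> m; have [j [Hj Jj]] := Ht m; exists (xs j); split.
    exact: leq_trans Hj (xs_ge j).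
  by exists j.
move=> x y [j [[_ Cj] <-]] [l [[_ Cl] <-]] xy.
case: (ltngtP j l) => [jl|lj|E].
- by have [_ ->] := xs_col jl.
- have [H _] := xs_col lj; by move: (leq_trans xy (ltnW H)); rewrite ltnn.
- by move: xy; rewrite E ltnn.
Qed.
End Ramsey.

Definition mk (x y : nat) : pair2 :=
  exist (fun q : nat * nat => q.1 < q.2) (x, maxn y x.+1) (leq_maxr y x.+1).

Theorem proposition3p1 (C : finType) (hC : 0 < #|C|) (phi : pair2 -> C) (k : nat) :
  exists (Nset : nat -> Prop) (c : 'I_k.+1 -> C),
    infinite_set Nset /\
    forall (i : 'I_k.+1) (p : pair2),
      in_sigma2 Nset p -> phi (shift_pair i p) = c i.
Proof.
have [N [c [HN Hc]]] := @ramsey {ffun 'I_k.+1 -> C}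
  (fun x y => [ffun i : 'I_k.+1 => phi (shift_pair i (mk x y))]).
exists N, (fun i => c i); split => //.
move=> i [[m n] h] [Nm Nn] /=.
have := congr1 (fun f : {ffun 'I_k.+1 -> C} => f i) (Hc m n Nm Nn h); rewrite /= ffunE => <-.
congr (phi (shift_pair i _)); apply: val_inj => /=.
by rewrite (maxn_idPl h).
Qed.
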